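(* Under the hypotheses of the conservation lemma (i.e. $(p^*,q^* )\in(0,1)^2$ maximizes $\ell(p,q,K)$ over $[0,1]^2$ with finite value), with $g(x)=p^*K(x)+q^*(1-K(x))$ we have $g(x)\in[\frac{1}{|B|},1]$ for every $x\in M$ and $g(x)\in[0,\frac{|B|-1}{|B|}]$ for every $x\in B\setminus M$.
   Context: $B\subset\mathbb{R}^d$ finite nonempty, $m:B\to\{0,1\}$, $M=\{x\in B:m(x)=1\}$. For $p,q\in[0,1]$ and $K:B\to[0,1]$, $g(x)=pK(x)+q(1-K(x))$ and $\ell(p,q,K)=\frac{1}{|B|}\big(\sum_{x\in M}\log g(x)+\sum_{x\in B\setminus M}\log(1-g(x))\big)$, with $\log 0=-\infty$. *)

(* Defs.v *)
From Stdlib Require Import Reals Lra List.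
From Stdlib Require Vectors.Fin.
Import ListNotations.
Open Scope R_scope.

Definition point (d : nat) : Type := Fin.t d -> R.

(* Extended reals [-oo, +oo) : just what is needed for log with log 0 = -oo. *)
Inductive ER : Type := NegInf | Fi (r : R).

Definition eadd (a b : ER) : ER :=
  match a, b with
  | Fi x, Fi y => Fi (x + y)
  | _, _ => NegInf
  end.

Definition escale (c : R) (a : ER) : ER :=
  match a with Fi x => Fi (c * x) | NegInf => NegInf end.

Definition ele (a b : ER) : Prop :=
  match a, b with
  | NegInf, _ => True
  | Fi _, NegInf => False
  | Fi x, Fi y => x <= y
  end.

(* log on [0, +oo) with log 0 = -oo (nonpositive arguments sent to -oo). *)
Definition elog (x : R) : ER :=
  if Rlt_dec 0 x then Fi (ln x) else NegInf.

Definition esum {X : Type} (f : X -> ER) (l : list X) : ER :=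
  fold_right (fun x acc => eadd (f x) acc) (Fi 0) l.

Definition gfun {X : Type} (p q : R) (K : X -> R) (x : X) : R :=
  p * K x + q * (1 - K x).

(* ell(p,q,K) = 1/|B| ( sum_{x in M} log g(x) + sum_{x in B\M} log (1 - g(x)) ),
   with B given as a duplicate-free list and m : B -> {0,1} as a boolean function
   (M = {x in B | m x = true}). *)
Definition ell {X : Type} (B : list X) (m : X -> bool) (p q : R) (K : X -> R) : ER :=
  escale (/ INR (length B))
    (eadd (esum (fun x => elog (gfun p q K x)) (filter m B))
          (esum (fun x => elog (1 - gfun p q K x)) (filter (fun x => negb (m x)) B))).

(* Main.v *)
Require Import Defs.
From Stdlib Require Import Reals List Lra Lia.
Open Scope R_scope.

Fixpoint prodl {X : Type} (f : X -> R) (l : list X) : R :=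
  match l with nil => 1 | a :: l' => f a * prodl f l' end.

Lemma prodl_pos {X} (f : X -> R) l : (forall y, In y l -> 0 < f y) -> 0 < prodl f l.
Proof.
  induction l as [|a l IH]; simpl; intros H; [lra|].
  apply Rmult_lt_0_compat; auto.
Qed.

Lemma prodl_ext {X} (f g : X -> R) l : (forall y, In y l -> f y = g y) -> prodl f l = prodl g l.
Proof.
  induction l as [|a l IH]; simpl; intros H; auto.
  rewrite H by auto; rewrite IH; auto.
Qed.

Lemma prodl_scale {X} (u : X -> R) t l : prodl (fun y => t * u y) l = t ^ length l * prodl u l.
Proof. induction l as [|a l IH]; simpl; [ring|rewrite IH; ring]. Qed.

Lemma prodl_mono {X} (f g : X -> R) l : (forall y, In y l -> 0 < f y <= g y) -> prodl f l <= prodl g l.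
Proof.
  induction l as [|a l IH]; simpl; intros H; [lra|].
  assert (H1 := H a (or_introl eq_refl)).
  assert (IH' : prodl f l <= prodl g l) by auto.
  assert (0 < prodl f l) by (apply prodl_pos; intros; apply H; auto).
  nra.
Qed.

Lemma esum_elog {X} (h : X -> R) l : (forall y, In y l -> 0 < h y) ->
  esum (fun y => elog (h y)) l = Fi (ln (prodl h l)).
Proof.
  induction l as [|a l IH]; simpl; intros H.
  - rewrite ln_1; auto.
  - rewrite IH by auto. unfold elog. destruct (Rlt_dec 0 (h a)) as [Ha|Ha].
    + simpl. rewrite ln_mult; auto. apply prodl_pos; auto.
    + exfalso; apply Ha; auto.
Qed.

Lemma gfun_bounds {X} p q (K : X -> R) y : 0 < p < 1 -> 0 < q < 1 -> 0 <= K y <= 1 ->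
  0 < gfun p q K y < 1.
Proof.
  unfold gfun; intros Hp Hq HK.
  destruct (Rle_dec p q).
  - assert (0 <= (q - p) * (1 - K y)) by nra. assert ((q - p) * K y >= 0) by nra. split; nra.
  - assert (0 <= (p - q) * K y) by nra. assert ((p - q) * (1 - K y) >= 0) by nra. split; nra.
Qed.

Definition nf {X} (m : X -> bool) := fun x : X => negb (m x).

Lemma ell_eq {X} (B : list X) m p q K : 0 < p < 1 -> 0 < q < 1 ->
  (forall x, In x B -> 0 <= K x <= 1) ->
  ell B m p q K = Fi (/ INR (length B) *
     (ln (prodl (gfun p q K) (filter m B)) +
      ln (prodl (fun y => 1 - gfun p q K y) (filter (fun x => negb (m x)) B)))).
Proof.
  intros Hp Hq HK. unfold ell.
  rewrite (esum_elog (gfun p q K)).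
  2:{ intros y Hy. apply filter_In in Hy. apply gfun_bounds; try tauto. apply HK; tauto. }
  rewrite (esum_elog (fun y => 1 - gfun p q K y)).
  2:{ intros y Hy. apply filter_In in Hy.
      assert (0 < gfun p q K y < 1) by (apply gfun_bounds; try tauto; apply HK; tauto). lra. }
  reflexivity.
Qed.

Lemma pow_bern s k : 0 <= s <= 1 -> 1 - INR k * s <= (1 - s) ^ k.
Proof.
  intros Hs. induction k as [|k IH]; [simpl; lra|].
  rewrite S_INR. change ((1 - s) ^ S k) with ((1 - s) * (1 - s) ^ k). assert (0 <= INR k) by apply pos_INR.
  assert (0 <= 1 - s) by lra. nra.
Qed.

Lemma key_real (k : nat) (w : R) : 0 < w < 1 ->
  (forall t, 0 < t < 1 -> t ^ k * (1 - t * w) <= 1 - w) ->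
  w * (INR k + 1) <= INR k.
Proof.
  intros Hw H. set (kk := INR k). assert (Hk : 0 <= kk) by apply pos_INR.
  destruct (Rle_dec (w * (kk + 1)) kk) as [|Hc]; [auto|exfalso].
  set (c := w - kk * (1 - w)).
  assert (Hc' : 0 < c) by (unfold c; lra).
  set (s := c / (2 * (kk * w + 1))).
  assert (Hd : 0 < 2 * (kk * w + 1)) by nra.
  assert (Hs1 : 0 < s) by (unfold s; apply Rdiv_lt_0_compat; lra).
  assert (Hs2 : s * (2 * (kk * w + 1)) = c) by (unfold s; field; lra).
  assert (Hcw : c <= w) by (unfold c; nra).
  assert (Hs3 : s < 1 / 2) by nra.
  specialize (H (1 - s) ltac:(lra)).
  assert (Hb := pow_bern s k ltac:(lra)). fold kk in Hb.
  assert (0 < 1 - (1 - s) * w) by nra.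
  assert ((1 - kk * s) * (1 - (1 - s) * w) <= 1 - w) by nra.
  assert (s * (c - kk * w * s) <= 0) by (unfold c; nra).
  assert (kk * w * s * 2 < c) by nra.
  nra.
Qed.

Lemma prodl_split {X} (w : X -> R) t x l : 0 < t < 1 ->
  (forall y, In y l -> 0 < w y < 1) -> In x l ->
  (1 - t * w x) * prodl (fun y => 1 - w y) l <= (1 - w x) * prodl (fun y => 1 - t * w y) l.
Proof.
  intros Ht. induction l as [|a l IH]; simpl; intros Hw Hx; [tauto|].
  assert (Hmono : prodl (fun y => 1 - w y) l <= prodl (fun y => 1 - t * w y) l).
  { apply prodl_mono. intros y Hy. assert (Hy' := Hw y (or_intror Hy)). nra. }
  assert (P1 : 0 < prodl (fun y => 1 - w y) l) by
    (apply prodl_pos; intros y Hy; assert (Hy' := Hw y (or_intror Hy)); lra).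
  assert (Ha := Hw a (or_introl eq_refl)).
  destruct Hx as [<-|Hx].
  - assert (0 < 1 - t * w a) by nra.
    assert (0 <= (1 - t * w a) * (1 - w a)) by nra.
    assert (0 <= (1 - t * w a) * (1 - w a) * (prodl (fun y => 1 - t * w y) l - prodl (fun y => 1 - w y) l)) by (apply Rmult_le_pos; lra).
    nra.
  - assert (Hx' : 0 < w x < 1) by auto.
    specialize (IH (fun y Hy => Hw y (or_intror Hy)) Hx).
    assert (0 < 1 - w a) by lra. assert (1 - w a <= 1 - t * w a) by nra.
    assert (0 < 1 - t * w x) by nra.
    set (P := prodl (fun y => 1 - w y) l) in *. set (T := prodl (fun y => 1 - t * w y) l) in *.
    assert (0 <= (1 - t * w x) * P) by nra.
    assert ((1 - t * w x) * P * (1 - w a) <= (1 - t * w x) * P * (1 - t * w a)) by (apply Rmult_le_compat_l; lra).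
    assert ((1 - w x) * T * (1 - t * w a) >= (1 - t * w x) * P * (1 - t * w a)) by (apply Rle_ge, Rmult_le_compat_r; lra).
    nra.
Qed.

Lemma general {X} (L1 L2 : list X) (u w : X -> R) x :
  (forall y, In y L1 -> 0 < u y < 1) -> (forall y, In y L2 -> 0 < w y < 1) -> In x L2 ->
  (forall t, 0 < t < 1 ->
     prodl (fun y => t * u y) L1 * prodl (fun y => 1 - t * w y) L2
     <= prodl u L1 * prodl (fun y => 1 - w y) L2) ->
  w x * (INR (length L1) + 1) <= INR (length L1).
Proof.
  intros Hu Hw Hx H. apply key_real; [auto|].
  intros t Ht. specialize (H t Ht). rewrite prodl_scale in H.
  assert (U : 0 < prodl u L1) by (apply prodl_pos; intros y Hy; apply Hu; auto).
  assert (W : 0 < prodl (fun y => 1 - w y) L2) by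
    (apply prodl_pos; intros y Hy; assert (Hy' := Hw y Hy); lra).
  assert (S := prodl_split w t x L2 Ht Hw Hx).
  assert (Tp : 0 < t ^ length L1) by (apply pow_lt; lra).
  assert (Hwx := Hw x Hx).
  set (T2 := prodl (fun y => 1 - t * w y) L2) in *.
  set (W2 := prodl (fun y => 1 - w y) L2) in *.
  set (U1 := prodl u L1) in *. set (tk := t ^ length L1) in *.
  assert (tk * U1 * ((1 - t * w x) * W2) <= tk * U1 * ((1 - w x) * T2)).
  { apply Rmult_le_compat_l; [nra|auto]. }
  assert ((1 - w x) * (tk * U1 * T2) <= (1 - w x) * (U1 * W2)).
  { apply Rmult_le_compat_l; [lra|auto]. }
  assert (HH : (tk * (1 - t * w x)) * (U1 * W2) <= (1 - w x) * (U1 * W2)) by nra.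
  assert (0 < U1 * W2) by nra.
  apply Rmult_le_reg_r with (U1 * W2); auto.
Qed.

Lemma ln_le_cancel a b : 0 < a -> 0 < b -> ln a <= ln b -> a <= b.
Proof.
  intros Ha Hb H. destruct (Rle_dec a b); auto.
  assert (ln b < ln a) by (apply ln_increasing; lra). lra.
Qed.

Theorem lemmaA2 (d : nat) (B : list (point d)) (m : point d -> bool)
  (K : point d -> R) (ps qs : R) :
  NoDup B -> B <> nil ->
  (forall x, In x B -> 0 <= K x <= 1) ->
  0 < ps < 1 -> 0 < qs < 1 ->
  (forall p q, 0 <= p <= 1 -> 0 <= q <= 1 -> ele (ell B m p q K) (ell B m ps qs K)) ->
  (exists v : R, ell B m ps qs K = Fi v) ->
  forall x, In x B ->
    (m x = true -> / INR (length B) <= gfun ps qs K x <= 1) /\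
    (m x = false -> 0 <= gfun ps qs K x <= (INR (length B) - 1) / INR (length B)).
Proof.
  intros _ _ HK Hps Hqs Hmax _ x Hx.
  set (g := gfun ps qs K) in *.
  assert (Hg : forall y, In y B -> 0 < g y < 1) by (intros; apply gfun_bounds; auto).
  assert (Hgx := Hg x Hx).
  set (M := filter m B). set (NM := filter (fun x => negb (m x)) B).
  assert (Hlen : (length M + length NM)%nat = length B) by apply filter_length.
  assert (HN : 0 < INR (length B)).
  { apply lt_0_INR. destruct B; simpl; [contradiction|lia]. }
  assert (Hcmp : forall p q, 0 < p < 1 -> 0 < q < 1 ->
     prodl (gfun p q K) M * prodl (fun y => 1 - gfun p q K y) NM <=
     prodl g M * prodl (fun y => 1 - g y) NM).
  { intros p q Hp Hq. specialize (Hmax p q ltac:(lra) ltac:(lra)).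
    rewrite !ell_eq in Hmax by auto. simpl in Hmax.
    apply Rmult_le_compat_l with (r := INR (length B)) in Hmax; [|lra].
    rewrite <- !Rmult_assoc, Rinv_r in Hmax by lra. rewrite !Rmult_1_l in Hmax.
    assert (P1 : forall p q, 0 < p < 1 -> 0 < q < 1 -> 0 < prodl (gfun p q K) M).
    { intros; apply prodl_pos; intros y Hy; apply filter_In in Hy; apply gfun_bounds; try tauto; apply HK; tauto. }
    assert (P2 : forall p q, 0 < p < 1 -> 0 < q < 1 -> 0 < prodl (fun y => 1 - gfun p q K y) NM).
    { intros; apply prodl_pos; intros y Hy; apply filter_In in Hy.
      assert (0 < gfun p0 q0 K y < 1) by (apply gfun_bounds; try tauto; apply HK; tauto). lra. }
    assert (A1 := P1 p q Hp Hq). assert (A2 := P2 p q Hp Hq).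
    assert (A3 := P1 ps qs Hps Hqs). assert (A4 := P2 ps qs Hps Hqs).
    fold M NM g in Hmax; fold g in A3; fold g in A4.
    rewrite <- (ln_mult _ _ A1 A2), <- (ln_mult _ _ A3 A4) in Hmax.
    apply ln_le_cancel; [apply Rmult_lt_0_compat; auto|apply Rmult_lt_0_compat; auto|exact Hmax]. }
  split; intros Hm.
  - split; [|lra].
    assert (HxM : In x M) by (apply filter_In; auto).
    assert (Hgen := general NM M (fun y => 1 - g y) (fun y => 1 - g y) x).
    assert (HH : (1 - g x) * (INR (length NM) + 1) <= INR (length NM)).
    { apply Hgen; auto.
      - intros y Hy. apply filter_In in Hy. assert (Hy' := Hg y (proj1 Hy)). lra.
      - intros y Hy. apply filter_In in Hy. assert (Hy' := Hg y (proj1 Hy)). lra.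
      - intros t Ht.
        specialize (Hcmp (1 - t * (1 - ps)) (1 - t * (1 - qs)) ltac:(nra) ltac:(nra)).
        rewrite (prodl_ext (gfun _ _ K) (fun y => 1 - t * (1 - g y))) in Hcmp
          by (intros; unfold g, gfun; ring).
        rewrite (prodl_ext (fun y => 1 - gfun _ _ K y) (fun y => t * (1 - g y))) in Hcmp
          by (intros; unfold g, gfun; ring).
        rewrite (prodl_ext (fun y => 1 - (1 - g y)) g) by (intros; ring).
        lra. }
    assert (HM1 : (1 <= length M)%nat) by (destruct M; simpl in *; [tauto|lia]).
    assert (Hle : INR (length NM) + 1 <= INR (length B)).
    { rewrite <- Hlen, plus_INR. apply le_INR in HM1. simpl in HM1. lra. }
    assert (1 <= g x * (INR (length NM) + 1)) by lra.
    apply Rmult_le_reg_r with (INR (length B)); auto.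
    rewrite Rinv_l by lra.
    assert (0 < INR (length NM) + 1) by (assert (0 <= INR (length NM)) by apply pos_INR; lra).
    nra.
  - split; [lra|].
    assert (HxN : In x NM) by (apply filter_In; rewrite Hm; auto).
    assert (HH : g x * (INR (length M) + 1) <= INR (length M)).
    { apply (general M NM g g x); auto.
      - intros y Hy. apply filter_In in Hy. apply Hg; tauto.
      - intros y Hy. apply filter_In in Hy. apply Hg; tauto.
      - intros t Ht.
        specialize (Hcmp (t * ps) (t * qs) ltac:(nra) ltac:(nra)).
        rewrite (prodl_ext (gfun _ _ K) (fun y => t * g y)) in Hcmp
          by (intros; unfold g, gfun; ring).
        rewrite (prodl_ext (fun y => 1 - gfun _ _ K y) (fun y => 1 - t * g y)) in Hcmp
          by (intros; unfold g, gfun; ring).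
        lra. }
    assert (HM1 : (1 <= length NM)%nat) by (destruct NM; simpl in *; [tauto|lia]).
    assert (Hle : INR (length M) + 1 <= INR (length B)).
    { rewrite <- Hlen, plus_INR. apply le_INR in HM1. simpl in HM1. lra. }
    apply Rmult_le_reg_r with (INR (length B)); auto.
    unfold Rdiv. rewrite Rmult_assoc, Rinv_l, Rmult_1_r by lra.
    assert (0 <= INR (length M)) by apply pos_INR.
    nra.
Qed.
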